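(* Let $n \ge 1$ and let $\varphi : \mathbb{R} \to \mathbb{R}$ be a continuous activation function that can be uniformly approximated by one-to-one functions. If a function $g : \mathbb{R}^n \to \mathbb{R}$ is approximated by the family $\mathcal{N}_{\varphi, n}$, then $g$ is approximated by the family $\mathcal{N}^*_n$ of non-singular functions.
   Context: $\mathcal{N}_{\varphi,n}$ is the family of functions $\mathbb{R}^n \to \mathbb{R}$ defined by layered feed-forward networks with activation $\varphi$, input dimension $n$, output dimension 1, any finite number of hidden layers, each of width at most $n$; such a network with layer widths $n_0=n, n_1,\dots,n_{\kappa-1}, n_\kappa=1$ computes $\nu_\kappa\circ\ell_\kappa\circ\cdots\circ\nu_0\circ\ell_0$, where the $\ell_i$ are the affine maps given by the weights between consecutive layers and each $\nu_i$ applies the activation coordinatewise. The family $\mathcal{N}^*_n$ of non-singular functions is the union, over all continuous one-to-one activation functions $\psi:\mathbb{R}\to\mathbb{R}$, of the functions computed by such networks with activation $\psi$ in which every hidden layer has width exactly $n$, every weight matrix between two consecutive width-$n$ layers (including input to first hidden layer) is nonsingular, and the weight vector from the last hidden layer to the output is nonzero. An activation $\varphi$ is uniformly approximated by one-to-one functions if some sequence of continuous one-to-one functions converges uniformly on $\mathbb{R}$ to $\varphi$. A family $M$ approximates $g$ if for every compact $A\subset\mathbb{R}^n$ and $\epsilon>0$ there is $f\in M$ with $|f(x)-g(x)|<\epsilon$ for all $x\in A$. *)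

(* Defs.v *)
From HB Require Import structures.
From mathcomp Require Import all_boot all_order all_algebra.
From mathcomp Require Import all_classical all_reals all_analysis.
Import numFieldNormedType.Exports.
Set Implicit Arguments. Unset Strict Implicit. Unset Printing Implicit Defensive.
Import Order.TTheory GRing.Theory Num.Theory.
Local Open Scope ring_scope.
Local Open Scope classical_set_scope.

Section Nets.
Variable R : realType.

(* [hidden_part phi n k f]: f : R^n -> R^k is the map from the input layer to
   a layer of width k of a layered feed-forward network with activation phi,
   all of whose layers (input and hidden) have width <= n. *)
Inductive hidden_part (phi : R -> R) (n : nat) :
    forall k : nat, ('rV[R]_n -> 'rV[R]_k) -> Prop :=
| hp_input : hidden_part phi (@id 'rV[R]_n)
| hp_layer (k m : nat) (f : 'rV[R]_n -> 'rV[R]_k) (W : 'M[R]_(k, m)) (b : 'rV[R]_m) :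
    (m <= n)%N -> hidden_part phi f ->
    hidden_part phi (fun x => map_mx phi (f x *m W + b)).

Definition N_family (phi : R -> R) (n : nat) : set ('rV[R]_n -> R) :=
  [set g | exists (k : nat) (f : 'rV[R]_n -> 'rV[R]_k) (w : 'cV[R]_k) (b : R),
      hidden_part phi f /\ g = (fun x => phi ((f x *m w) ord0 ord0 + b))].

Inductive ns_hidden_part (psi : R -> R) (n : nat) :
    ('rV[R]_n -> 'rV[R]_n) -> Prop :=
| nsp_input : ns_hidden_part psi (@id 'rV[R]_n)
| nsp_layer (f : 'rV[R]_n -> 'rV[R]_n) (W : 'M[R]_n) (b : 'rV[R]_n) :
    W \in unitmx -> ns_hidden_part psi f ->
    ns_hidden_part psi (fun x => map_mx psi (f x *m W + b)).

Definition Nstar_family (n : nat) : set ('rV[R]_n -> R) :=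
  [set g | exists (psi : R -> R) (f : 'rV[R]_n -> 'rV[R]_n) (w : 'cV[R]_n) (b : R),
      [/\ continuous (psi : R -> R), injective psi, ns_hidden_part psi f, w != 0 &
          g = (fun x => psi ((f x *m w) ord0 ord0 + b))]].

Definition unif_approx_by_injective (phi : R -> R) : Prop :=
  exists psi : nat -> R -> R,
    (forall k, continuous (psi k : R -> R) /\ injective (psi k)) /\
    (forall eps : R, 0 < eps -> exists N : nat, forall k, (N <= k)%N ->
        forall x : R, `|psi k x - phi x| < eps).

Definition approximates (n : nat) (M : set ('rV[R]_n -> R)) (g : 'rV[R]_n -> R) : Prop :=
  forall A : set 'rV[R]_n, compact A ->
  forall eps : R, 0 < eps ->
    exists f, M f /\ forall x, A x -> `|f x - g x| < eps.

End Nets.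

(* Main.v *)
Require Import Defs.
From HB Require Import structures.
From mathcomp Require Import all_boot all_order all_algebra.
From mathcomp Require Import all_classical all_reals all_analysis.
From mathcomp Require Import ring lra zify.
Import Order.TTheory GRing.Theory Num.Theory numFieldNormedType.Exports.
Local Open Scope ring_scope.


Lemma seq_min_pos (R : realType) (s : seq R) (h : R -> R) :
  (forall t, 0 < h t) -> exists d : R, 0 < d /\ forall t, t \in s -> d <= h t.
Proof.
move=> hp; elim: s => [|a s [d [d0 hd]]]; first by exists 1.
exists (Num.min d (h a)); split; first by rewrite lt_min d0 hp.
move=> t; rewrite inE => /orP[/eqP->|ts]; first by rewrite ge_min lexx orbT.
by rewrite ge_min hd.
Qed.

Lemma cont_delta (R : realType) (f : R -> R) (t e : R) : continuous f -> 0 < e ->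
  exists d, 0 < d /\ forall s, `|t - s| < d -> `|f t - f s| < e.
Proof.
move=> cf e0.
have := (proj1 (@cvgrPdist_lt _ _ _ (nbhs t) _ f (f t))) (cf t) e e0.
move=> h; have [d /= d0 hd] := (nbhs_ballP _ _).1 (h _); exists d; split => // s hs.

Qed.

Lemma unif_cont (R : realType) (f : R -> R) : continuous f -> forall L e : R, 0 < e ->
  exists d, 0 < d /\ forall z z', `|z| <= L -> `|z - z'| < d -> `|f z - f z'| < e.
Proof.
move=> cf L e e0.
have e20 : 0 < e / 2 by rewrite divr_gt0.
have /choice [dd hdd] : forall t : R, exists d, 0 < d /\
   forall s, `|t - s| < d -> `|f t - f s| < e / 2 by move=> t; exact: cont_delta.
have := @segment_compact R (-L) L; rewrite compact_cover => /(_ R setT (fun t => ball t (dd t / 2))).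
case.
- by move=> t _; apply: ball_open; rewrite divr_gt0 //; case: (hdd t).
- move=> z _; exists z => //; apply: ballxx; rewrite divr_gt0 //; by case: (hdd z).
move=> D' _ hcov.
have [d [d0 hd]] := @seq_min_pos R (finmap.enum_fset D') (fun t => dd t / 2)
  (fun t => divr_gt0 (proj1 (hdd t)) (ltr0Sn _ 1)).
exists d; split => // z z' hz hzz'.
have zin : `[- L, L]%classic z by rewrite /= in_itv /= -ler_norml.
have [t tD /= htz] := hcov z zin.
have := hd t tD => hdt.
have h1 : `|t - z| < dd t by apply: lt_trans htz _; rewrite ltr_pdivrMr // ltr_pMr //; [rewrite ltr1n | case: (hdd t)].
have h2 : `|t - z'| < dd t.
  have -> : t - z' = (t - z) + (z - z') by rewrite addrA subrK.
  apply: le_lt_trans (ler_normD _ _) _.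
  rewrite [X in _ < X](splitr (dd t)); apply: ltrD; first by apply: htz.
  by apply: lt_le_trans hzz' hdt.
have := (proj2 (hdd t)) _ h1; have := (proj2 (hdd t)) _ h2 => a b.
have -> : f z - f z' = (f z - f t) + (f t - f z') by rewrite addrA subrK.
rewrite (splitr e); apply: le_lt_trans (ler_normD _ _) _.
by apply: ltrD => //; rewrite distrC.
Qed.

Lemma bound_cont (R : realType) (f : R -> R) : continuous f -> forall L : R,
  exists C, 0 <= C /\ forall t, `|t| <= L -> `|f t| <= C.
Proof.
move=> cf L; have [L0|L0] := leP 0 L; last first.
  by exists 0; split => // t ht; exfalso; move: (le_lt_trans (normr_ge0 t) (le_lt_trans ht L0)); rewrite ltxx.
have hL : - L <= L by rewrite (le_trans _ L0) // oppr_le0.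
have [c _ hc] := @EVT_max R (fun t => `|f t|) (- L) L hL
  (@continuous_subspaceT _ _ _ (fun t : R => `|f t|) (fun t => continuous_comp (cf t) (@norm_continuous _ _ (f t)))).
exists `|f c|; split => // t ht; apply: hc; rewrite in_itv /= -ler_norml //.
Qed.

Lemma compact_rV_bound (R : realType) n (A : set 'rV[R]_n) : compact A ->
  exists M : R, forall x, A x -> forall i, `|x ord0 i| <= M.
Proof.
move=> cA; have [M [_ hM]] := compact_bounded cA.
exists (M + 1) => x Ax i.
have hM1 : M < M + 1 by rewrite ltrDl ltr01.
have := hM (M + 1) hM1 x Ax.
apply: le_trans.
have -> : `|x| = mx_norm x by [].
rewrite mx_normrE.
exact: (le_bigmax _ _ (ord0, i)).
Qed.


Lemma char_poly_horner (F : fieldType) n (A : 'M[F]_n) a :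
  (char_poly A).[a] = \det (a%:M - A).
Proof.
symmetry; rewrite horner_sum; apply: eq_bigr => s _.
rewrite hornerM horner_exp !hornerE; congr (_ * _).
rewrite (big_morph _ (fun p q => hornerM p q a) (hornerC 1 a)).
by apply: eq_bigr => i _; rewrite !mxE !(hornerE, hornerMn).
Qed.

Lemma exists_nonroot (R : realFieldType) (p : {poly R}) (d : R) :
  p != 0 -> 0 < d -> exists e, [/\ 0 < e, e <= d & ~~ root p e].
Proof.
move=> p0 d0.
set rs := [seq d / (i.+1)%:R | i <- iota 0 (size p)].
have urs : uniq rs.
  rewrite map_inj_uniq ?iota_uniq // => i j /= h.
  have : (i.+1%:R : R) = j.+1%:R.
    apply: invr_inj; apply: (mulrI (x:=d)) => //; by rewrite unitfE gt_eqF.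
  by move/eqP; rewrite eqr_nat => /eqP [].
have : ~~ all (root p) rs.
  apply/negP => hall; have := max_poly_roots p0 hall urs.
  by rewrite size_map size_iota ltnn.
case/allPn => x /mapP [i _ ->] hx; exists (d / i.+1%:R); split => //.
  by rewrite divr_gt0.
by rewrite ler_pdivrMr // ler_pMr // ler1n.
Qed.

Lemma exists_unit_pert (R : realFieldType) n (A : 'M[R]_n) (d : R) : 0 < d ->
  exists e, [/\ 0 < e, e <= d & (A + e%:M) \in unitmx].
Proof.
move=> d0.
have p0 : char_poly (- A) != 0 by apply: monic_neq0; apply: char_poly_monic.
have [e [e0 ed he]] := @exists_nonroot R _ d p0 d0.
exists e; split => //.
rewrite unitmxE unitfE; move: he; rewrite /root char_poly_horner.
by rewrite opprK addrC.
Qed.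


Section Net.
Context {R : realType}.

Definition vget {k} (v : 'rV[R]_k) (i : nat) : R :=
  match (insub i : option 'I_k) with Some j => v ord0 j | None => 0 end.

Definition mget {k m} (W : 'M[R]_(k, m)) (i j : nat) : R :=
  match (insub i : option 'I_k), (insub j : option 'I_m) with
  | Some a, Some b => W a b | _, _ => 0 end.

Lemma vgetE k (v : 'rV[R]_k) (i : 'I_k) : vget v i = v ord0 i.
Proof. by rewrite /vget valK. Qed.

Lemma vget_out k (v : 'rV[R]_k) i : (k <= i)%N -> vget v i = 0.
Proof. by move=> h; rewrite /vget insubF // ltnNge h. Qed.

Lemma mgetE k m (W : 'M[R]_(k, m)) (a : 'I_k) (b : 'I_m) : mget W a b = W a b.
Proof. by rewrite /mget !valK. Qed.

Lemma mget_outl k m (W : 'M[R]_(k, m)) i j : (k <= i)%N -> mget W i j = 0.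
Proof. by move=> h; rewrite /mget insubF // ltnNge h. Qed.

Lemma mget_outr k m (W : 'M[R]_(k, m)) i j : (m <= j)%N -> mget W i j = 0.
Proof. by move=> h; rewrite /mget; case: insub => [a|] //; rewrite insubF // ltnNge h. Qed.

Lemma vget_map k (g : R -> R) (v : 'rV[R]_k) c : (c < k)%N ->
  vget (map_mx g v) c = g (vget v c).
Proof. by move=> hc; change c with (nat_of_ord (Ordinal hc)); rewrite !vgetE mxE. Qed.

Lemma vget_bound k (v : 'rV[R]_k) M : 0 <= M -> (forall i : 'I_k, `|v ord0 i| <= M) ->
  forall i, `|vget v i| <= M.
Proof.
move=> M0 h i; case: (ltnP i k) => hi; last by rewrite vget_out // normr0.
by change i with (nat_of_ord (Ordinal hi)); rewrite vgetE.
Qed.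

Lemma vget_ge0 k (v : 'rV[R]_k) M : (forall i, `|vget v i| <= M) -> 0 <= M.
Proof. by move=> h; have := h k; rewrite vget_out // normr0. Qed.

Lemma vgetD k (u v : 'rV[R]_k) i : vget (u + v) i = vget u i + vget v i.
Proof. by rewrite /vget; case: insub => [j|]; rewrite ?mxE ?addr0. Qed.

Lemma le_sum1 (I : finType) (F : I -> R) i : (forall j, 0 <= F j) -> F i <= \sum_j F j.
Proof. by move=> h; rewrite (bigD1 i) //= lerDl sumr_ge0. Qed.

Definition mnorm {k m} (W : 'M[R]_(k, m)) : R := \sum_a \sum_b `|W a b|.

Lemma mget_le k m (W : 'M[R]_(k, m)) i j : `|mget W i j| <= mnorm W.
Proof.
have h0 : 0 <= \sum_a \sum_b `|W a b| by apply: sumr_ge0 => a _; apply: sumr_ge0.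
rewrite /mget /mnorm; case: insub => [a|]; last by rewrite normr0.
case: insub => [b|]; last by rewrite normr0.
have h1 := le_sum1 _ (fun b' => `|W a b'|) b (fun _ => normr_ge0 _).
have h2 := le_sum1 _ (fun a' => \sum_b' `|W a' b'|) a (fun _ => sumr_ge0 _ (fun _ _ => normr_ge0 _)).
exact: le_trans h1 h2.
Qed.

Definition vnorm {k} (v : 'rV[R]_k) : R := \sum_a `|v ord0 a|.

Lemma vget_le k (v : 'rV[R]_k) i : `|vget v i| <= vnorm v.
Proof.
rewrite /vget /vnorm; case: insub => [a|]; last by rewrite normr0 sumr_ge0.
by apply: (le_sum1 _ (fun a' => `|v ord0 a'|) a).
Qed.

Lemma sum_bound k (G : 'I_k -> R) C : (forall l, `|G l| <= C) ->
  `|\sum_(l < k) G l| <= k%:R * C.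
Proof.
move=> h; apply: le_trans (ler_norm_sum _ _ _) _.
apply: le_trans (ler_sum _ (fun l _ => h l)) _.
by rewrite sumr_const card_ord mulr_natl.
Qed.

Variable n : nat.

Definition extM {k m} (W : 'M[R]_(k, m)) : 'M[R]_n := \matrix_(i, j) mget W i j.
Definition extv {m} (b : 'rV[R]_m) : 'rV[R]_n := \row_j vget b j.

Lemma vget_extv m (b : 'rV[R]_m) c : (m <= n)%N -> vget (extv b) c = vget b c.
Proof.
move=> hm; case: (ltnP c n) => hc.
  by change c with (nat_of_ord (Ordinal hc)); rewrite vgetE mxE.
by rewrite !vget_out // (leq_trans hm hc).
Qed.

Lemma mul_extM k m (u : 'rV[R]_n) (W : 'M[R]_(k, m)) (c : 'I_n) : (k <= n)%N ->
  (u *m extM W) ord0 c = \sum_(l < k) vget u l * mget W l c.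
Proof.
move=> hk; rewrite mxE (big_ord_widen n (fun l => vget u l * mget W l c) hk) [RHS]big_mkcond /=.
apply: eq_bigr => l _; rewrite mxE vgetE; case: ltnP => h //.
by rewrite mget_outl // mulr0.
Qed.

Lemma mul_W k m (v : 'rV[R]_k) (W : 'M[R]_(k, m)) c : (c < m)%N ->
  vget (v *m W) c = \sum_(l < k) vget v l * mget W l c.
Proof.
move=> hc; change c with (nat_of_ord (Ordinal hc)); rewrite vgetE mxE.
by apply: eq_bigr => l _; rewrite vgetE mgetE.
Qed.

Lemma pre_expand k m (u : 'rV[R]_n) (W : 'M[R]_(k, m)) (e : R) (b : 'rV[R]_m) c :
  (k <= n)%N -> (m <= n)%N -> (c < n)%N ->
  vget (u *m (extM W + e%:M) + extv b) c =
  \sum_(l < k) vget u l * mget W l c + e * vget u c + vget b c.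
Proof.
move=> hk hm hc; rewrite vgetD vget_extv //; congr (_ + _).
change c with (nat_of_ord (Ordinal hc)).
by rewrite vgetE mulmxDr mul_mx_scalar mxE mul_extM // mxE vgetE.
Qed.

End Net.


Lemma small_mul (R : realFieldType) (C d : R) : 0 <= C -> 0 < d ->
  0 < d / (4 * (C + 1)) /\ C * (d / (4 * (C + 1))) <= d / 4.
Proof.
move=> C0 d0; have C1 : 0 < C + 1 by lra.
have h4 : 0 < 4 * (C + 1) by rewrite mulr_gt0 // ltr0n.
split; first by rewrite divr_gt0.
have -> : d / 4 = (C + 1) * (d / (4 * (C + 1))).
  by field; rewrite gt_eqF.
rewrite ler_pM2r ?divr_gt0 //; lra.
Qed.

Section Main.
Variable R : realType.
Variable n : nat.
Variable phi : R -> R.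
Variable psi : nat -> R -> R.
Hypothesis cphi : continuous phi.
Hypothesis happ : forall eps : R, 0 < eps -> exists N : nat, forall j, (N <= j)%N ->
        forall x : R, `|psi j x - phi x| < eps.

Definition good {k} (f : 'rV[R]_n -> 'rV[R]_k) (A : set 'rV[R]_n) (M B : R) :=
  [/\ 0 <= M, 0 <= B, (forall x, A x -> forall i, `|vget (f x) i| <= M) &
  forall eps, 0 < eps -> exists N, forall j, (N <= j)%N -> exists F, ns_hidden_part (psi j) F /\
   forall x, A x -> (forall i, `|vget (F x) i| <= B) /\
     forall i, (i < k)%N -> `|vget (F x) i - vget (f x) i| < eps].

Lemma pre_step k m (f : 'rV[R]_n -> 'rV[R]_k) (W : 'M[R]_(k, m)) (b : 'rV[R]_m) A M B :
  (k <= n)%N -> (m <= n)%N -> good f A M B ->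
  exists L L' : R, (forall x, A x -> forall c, (c < m)%N -> `|vget (f x *m W + b) c| <= L) /\
  forall d, 0 < d -> exists N, forall j, (N <= j)%N -> exists F (W' : 'M[R]_n),
    [/\ ns_hidden_part (psi j) F, W' \in unitmx &
    forall x, A x -> (forall c, (c < n)%N -> `|vget (F x *m W' + extv n b) c| <= L') /\
      forall c, (c < m)%N -> `|vget (F x *m W' + extv n b) c - vget (f x *m W + b) c| < d].
Proof.
move=> hk hm [M0 B0 hM hg].
set S := mnorm W; set Bb := vnorm b.
have S0 : 0 <= S := le_trans (normr_ge0 _) (mget_le _ _ W 0 0).
have Bb0 : 0 <= Bb := le_trans (normr_ge0 _) (vget_le _ b 0).
exists (k%:R * (M * S) + Bb), (k%:R * (B * S) + B + Bb); split.
  move=> x Ax c hc; rewrite vgetD mul_W //.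
  apply: le_trans (ler_normD _ _) _; apply: lerD; last exact: vget_le.
  apply: sum_bound => l; rewrite normrM; apply: ler_pM => //; [exact: hM | exact: mget_le].
move=> d d0.
have kS0 : 0 <= k%:R * S by rewrite mulr_ge0.
have [eta0 heta] := small_mul _ _ _ kS0 d0.
have [ed0 hed] := small_mul _ _ _ B0 d0.
have ed1 : 0 < Num.min 1 (d / (4 * (B + 1))) by rewrite lt_min ltr01 ed0.
have [e [e0 ele eu]] := @exists_unit_pert _ _ (extM n W) _ ed1.
have [N hN] := hg _ eta0.
exists N => j hj; have [F [hF hFx]] := hN j hj.
exists F, (extM n W + e%:M); split => //.
move=> x Ax; have [hFb hFa] := hFx x Ax.
have e1 : e <= 1 by apply: le_trans ele _; rewrite ge_min lexx.
have e2 : e <= d / (4 * (B + 1)) by apply: le_trans ele _; rewrite ge_min lexx orbT.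
split.
  move=> c hc; rewrite pre_expand //.
  apply: le_trans (ler_normD _ _) _; apply: lerD; last exact: vget_le.
  apply: le_trans (ler_normD _ _) _; apply: lerD.
    apply: sum_bound => l; rewrite normrM; apply: ler_pM => //; exact: mget_le.
  rewrite normrM (gtr0_norm e0); rewrite -[B]mul1r; apply: ler_pM => //; exact: ltW.
move=> c hc; rewrite pre_expand //; last exact: leq_trans hc hm.
rewrite vgetD mul_W //.
set s1 := \sum_(l < k) _; set s2 := \sum_(l < k) _.
have es : s1 - s2 = \sum_(l < k) (vget (F x) l - vget (f x) l) * mget W l c.
  by rewrite /s1 /s2 -sumrB; apply: eq_bigr => l _; rewrite mulrBl.
have -> : s1 + e * vget (F x) c + vget b c - (s2 + vget b c) = (s1 - s2) + e * vget (F x) c by ring.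
rewrite es; apply: le_lt_trans (ler_normD _ _) _.
have h1 : `|\sum_(l < k) (vget (F x) l - vget (f x) l) * mget W l c| <= d / 4.
  apply: le_trans (@sum_bound _ _ _ (d / (4 * (k%:R * S + 1)) * S) _) _.
    move=> l; rewrite normrM; apply: ler_pM => //; last exact: mget_le.
    exact: ltW (hFa l (ltn_ord l)).
  by rewrite mulrCA mulrC.
have h2 : `|e * vget (F x) c| <= d / 4.
  rewrite normrM (gtr0_norm e0); apply: le_trans hed.
  rewrite mulrC; apply: ler_pM => //; exact: ltW.
lra.
Qed.

Lemma step k m (f : 'rV[R]_n -> 'rV[R]_k) (W : 'M[R]_(k, m)) (b : 'rV[R]_m) A M B :
  (k <= n)%N -> (m <= n)%N -> good f A M B ->
  exists M' B', good (fun x => map_mx phi (f x *m W + b)) A M' B'.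
Proof.
move=> hk hm hg.
have [L [L' [hL hpre]]] := @pre_step k m f W b A M B hk hm hg.
have [C [C0 hC]] := bound_cont _ _ cphi L.
have [C' [C'0 hC']] := bound_cont _ _ cphi L'.
exists C, (C' + 1); split => //.
- lra.
- move=> x Ax i; case: (ltnP i m) => hi; last by rewrite vget_out // normr0.
  by rewrite vget_map //; apply: hC; apply: hL.
move=> eps eps0.
have eps20 : 0 < eps / 2 by rewrite divr_gt0.
have [dl [dl0 hdl]] := unif_cont _ _ cphi L _ eps20.
have [N1 hN1] := hpre _ dl0.
have [N2 hN2] := happ _ eps20.
have [N3 hN3] := happ _ ltr01.
exists (maxn N1 (maxn N2 N3)) => j hj.
have hj1 : (N1 <= j)%N by lia.
have hj2 : (N2 <= j)%N by lia.
have hj3 : (N3 <= j)%N by lia.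
have [F [W' [hF hW' hx]]] := hN1 j hj1.
exists (fun x => map_mx (psi j) (F x *m W' + extv n b)); split; first exact: nsp_layer.
move=> x Ax; have [hb ha] := hx x Ax; split.
  move=> i; case: (ltnP i n) => hi; last by rewrite vget_out // normr0; lra.
  rewrite vget_map //.
  set z := vget _ i.
  have -> : psi j z = (psi j z - phi z) + phi z by rewrite subrK.
  apply: le_trans (ler_normD _ _) _; rewrite addrC; apply: lerD; last exact: ltW (hN3 j hj3 z).
  exact: hC' (hb i hi).
move=> i hi; rewrite vget_map ?(leq_trans hi hm) // vget_map //.
set z' := vget _ i; set z := vget _ i.
have -> : psi j z' - phi z = (psi j z' - phi z') + (phi z' - phi z) by rewrite addrA subrK.
rewrite (splitr eps); apply: le_lt_trans (ler_normD _ _) _; apply: ltrD; first exact: hN2.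
rewrite distrC; apply: hdl; first exact: hL.
by rewrite distrC; apply: ha.
Qed.

Lemma hp_good k (f : 'rV[R]_n -> 'rV[R]_k) : hidden_part phi f ->
  (k <= n)%N /\ forall A, compact A -> exists M B, good f A M B.
Proof.
elim => [| k' m f' W b hm hf [hk IH]].
  split => // A cA.
  have [M0 hM0] := compact_rV_bound _ _ _ cA.
  have hM : 0 <= Num.max M0 0 by rewrite le_max lexx orbT.
  have hb : forall x, A x -> forall i, `|vget x i| <= Num.max M0 0.
    move=> x Ax; apply: vget_bound => // i; apply: le_trans (hM0 x Ax i) _.
    by rewrite le_max lexx.
  exists (Num.max M0 0), (Num.max M0 0); split => //.
  move=> eps eps0; exists 0%N => j _; exists id; split; first exact: nsp_input.
  by move=> x Ax; split; [exact: hb | move=> i _; rewrite subrr normr0].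
split => // A cA; have [M [B hg]] := IH A cA.
exact: (@step k' m f' W b A M B hk hm hg).
Qed.

End Main.


Lemma col_unit_neq0 (R : fieldType) n (W : 'M[R]_n) (c : 'I_n) :
  W \in unitmx -> col c W != 0.
Proof.
move=> hW; apply/negP => /eqP h.
have : (delta_mx c 0 : 'cV[R]_n) = invmx W *m (W *m delta_mx c 0).
  by rewrite mulmxA mulVmx // mul1mx.
rewrite -colE h mulmx0 => /matrixP /(_ c 0); rewrite !mxE !eqxx /=.
by move/eqP; rewrite oner_eq0.
Qed.

Theorem lemma1 (R : realType) (n : nat) (phi : R -> R) (g : 'rV[R]_n -> R) :
  (0 < n)%N ->
  continuous phi ->
  unif_approx_by_injective phi ->
  @approximates R n (@N_family R phi n) g ->
  @approximates R n (@Nstar_family R n) g.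
Proof.
move=> n0 cphi [psi [hpsi happ]] hg A cA eps eps0.
have e3 : 0 < eps / 3 by rewrite divr_gt0.
have [G [[k [f [w [b [hf ->]]]]] hG]] := hg A cA _ e3.
have [hk hgood] := @hp_good R n phi psi cphi happ k f hf.
have [M [B hgd]] := hgood A cA.
set brow : 'rV[R]_1 := const_mx b.
have h1n : (1 <= n)%N := n0.
have [L [L' [hL hpre]]] := @pre_step R n psi k 1 f w brow A M B hk h1n hgd.
have [dl [dl0 hdl]] := unif_cont _ _ cphi L _ e3.
have [N1 hN1] := hpre _ dl0.
have [N2 hN2] := happ _ e3.
have hj1 : (N1 <= maxn N1 N2)%N by lia.
have hj2 : (N2 <= maxn N1 N2)%N by lia.
set j := maxn N1 N2.
have [F [W' [hF hW' hx]]] := hN1 j hj1.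
pose c0 : 'I_n := Ordinal n0.
have e1 : forall x, (F x *m col c0 W') ord0 ord0 + b = vget (F x *m W' + extv n brow) 0.
  move=> x; rewrite colE mulmxA -colE; change 0%N with (nat_of_ord c0).
  rewrite vgetE !mxE.
  congr (_ + _); change (nat_of_ord c0) with (nat_of_ord (ord0 : 'I_1)).
  by rewrite vgetE mxE.
have e2 : forall x, (f x *m w) ord0 ord0 + b = vget (f x *m w + brow) 0.
  move=> x; change 0%N with (nat_of_ord (ord0 : 'I_1)); rewrite vgetE !mxE.
  by [].
exists (fun x => psi j ((F x *m col c0 W') ord0 ord0 + b)); split.
  exists (psi j), F, (col c0 W'), b; split => //; try by case: (hpsi j).
  exact: col_unit_neq0.
move=> x Ax; have [hb ha] := hx x Ax.
have := hG x Ax; rewrite /= e1 e2.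
set z' := vget (F x *m W' + _) 0; set z := vget (f x *m w + _) 0 => hGx.
have -> : psi j z' - g x = (psi j z' - phi z') + (phi z' - phi z) + (phi z - g x) by ring.
have hz : `|phi z' - phi z| < eps / 3.
  rewrite distrC; apply: hdl; first exact: hL.
  by rewrite distrC; apply: ha.
have hp := hN2 j hj2 z'.
have ht := ler_normD (psi j z' - phi z' + (phi z' - phi z)) (phi z - g x).
have ht2 := ler_normD (psi j z' - phi z') (phi z' - phi z).
lra.
Qed.
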